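(* Let $(X,\operatorname{d})$ be a bounded, complete metric space with a convex-like structure, and let $\mathfrak F=\{x_1,\dots,x_n\}\subset X$ be finite. Then $\operatorname{plane}(\mathfrak F)$ is $\sigma$-compact (hence separable).
   Context: Let $\operatorname{Prob}_n$ denote the set of probability measures on $\{1,\dots,n\}$ with the $\ell^1$-metric, and $X^{(n)}$ the $n$-fold product. A bounded metric space $(X,\operatorname{d})$ has a \emph{convex-like structure} if for every $n$ and $\mu\in\operatorname{Prob}_n$ there is a continuous map $\gamma_\mu\colon X^{(n)}\to X$ satisfying: (1) $\gamma_\mu(x_1,\dots,x_n)=\gamma_{\mu\circ\sigma}(x_{\sigma(1)},\dots,x_{\sigma(n)})$ for all $\sigma\in S_n$; (2) if $x_1=x_2$ then $\gamma_\mu(x_1,x_2,\dots,x_n)=\gamma_{\tilde\mu}(x_1,x_3,\dots,x_n)$ with $\tilde\mu(1)=\mu(1)+\mu(2)$, $\tilde\mu(j)=\mu(j+1)$ ($2\le j\le n-1$), and $\operatorname{Prob}_1$ gives the identity; (3) $\mu(i)=1$ implies $\gamma_\mu(x_1,\dots,x_n)=x_i$; (4) for a constant $C$, $\operatorname{d}(\gamma_\mu(\vec x),\gamma_{\tilde\mu}(\vec x))\le C\|\mu-\tilde\mu\|$ and $\operatorname{d}(\gamma_\mu(\vec x),\gamma_\mu(\vec y))\le\sum_i\mu(i)\operatorname{d}(x_i,y_i)$; (5) $\gamma_\nu(\gamma_\mu(x_1,\dots,x_n),\gamma_{\tilde\mu}(\tilde x_1,\dots,\tilde x_m))=\gamma_\eta(x_1,\dots,x_n,\tilde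 x_1,\dots,\tilde x_m)$ for $\nu\in\operatorname{Prob}_2$, where $\eta(i)=\nu(1)\mu(i)$, $\eta(n+j)=\nu(2)\tilde\mu(j)$. One writes $t_1x_1+\dots+t_nx_n:=\gamma_\mu(x_1,\dots,x_n)$ where $\mu(i)=t_i$. The convex hull is $\operatorname{conv}(\mathfrak F)=\{\sum_i\mu(i)x_i:\mu\in\operatorname{Prob}_n\}$, and the plane generated by $\mathfrak F$ is $\operatorname{plane}(\mathfrak F)=\{x\in X:\exists\, y,z\in\operatorname{conv}(\mathfrak F),\ 0<t\le1 \text{ with } tx+(1-t)y=z\}$. *)

(* Defs.v *)
From Stdlib Require Import Reals Lra List Permutation.
Import ListNotations.
Open Scope R_scope.

Definition is_metric {X : Type} (d : X -> X -> R) : Prop :=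
  (forall x y, 0 <= d x y) /\
  (forall x y, d x y = 0 <-> x = y) /\
  (forall x y, d x y = d y x) /\
  (forall x y z, d x z <= d x y + d y z).

Definition bounded_metric {X : Type} (d : X -> X -> R) : Prop :=
  exists M : R, forall x y, d x y <= M.

Definition cauchy_seq {X : Type} (d : X -> X -> R) (u : nat -> X) : Prop :=
  forall eps, 0 < eps -> exists N, forall m n, (N <= m)%nat -> (N <= n)%nat -> d (u m) (u n) < eps.

Definition seq_converges {X : Type} (d : X -> X -> R) (u : nat -> X) (l : X) : Prop :=
  forall eps, 0 < eps -> exists N, forall n, (N <= n)%nat -> d (u n) l < eps.

Definition complete_metric {X : Type} (d : X -> X -> R) : Prop :=
  forall u, cauchy_seq d u -> exists l, seq_converges d u l.

Definition open_set {X : Type} (d : X -> X -> R) (U : X -> Prop) : Prop :=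
  forall x, U x -> exists r, 0 < r /\ forall y, d x y < r -> U y.

Definition compact_set {X : Type} (d : X -> X -> R) (K : X -> Prop) : Prop :=
  forall (I : Type) (U : I -> X -> Prop),
    (forall i, open_set d (U i)) ->
    (forall x, K x -> exists i, U i x) ->
    exists l : list I, forall x, K x -> exists i, In i l /\ U i x.

Definition sigma_compact {X : Type} (d : X -> X -> R) (S : X -> Prop) : Prop :=
  exists K : nat -> X -> Prop,
    (forall n, compact_set d (K n)) /\
    (forall x, S x <-> exists n, K n x).

Definition sumR (l : list R) : R := fold_right Rplus 0 l.

Definition prob (mu : list R) : Prop :=
  Forall (fun t => 0 <= t) mu /\ sumR mu = 1.

Definition l1dist (mu nu : list R) : R :=
  sumR (map (fun p => Rabs (fst p - snd p)) (combine mu nu)).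

(* ---------- convex-like structure ----------
   g takes a list of weighted points [(t_1,x_1);...;(t_n,x_n)] and returns
   t_1 x_1 + ... + t_n x_n = gamma_mu(x_1,...,x_n) with mu(i) = t_i.
   It is only constrained on lists whose weight vector lies in Prob_n. *)
Definition valid {X : Type} (wl : list (R * X)) : Prop := prob (map fst wl).

Definition scale_w {X : Type} (c : R) (p : R * X) : R * X := (c * fst p, snd p).

Definition convex_like {X : Type} (d : X -> X -> R) (C : R)
  (g : list (R * X) -> X) : Prop :=
  (forall mu xs, prob mu -> length mu = length xs ->
     forall eps, 0 < eps -> exists delta, 0 < delta /\
       forall ys, Forall2 (fun x y => d x y < delta) xs ys ->
         d (g (combine mu xs)) (g (combine mu ys)) < eps) /\
  (forall wl wl', valid wl -> Permutation wl wl' -> g wl = g wl') /\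
  (forall a b x wl, valid ((a, x) :: (b, x) :: wl) ->
     g ((a, x) :: (b, x) :: wl) = g ((a + b, x) :: wl)) /\
  (forall x, g [(1, x)] = x) /\
  (forall wl x, valid wl -> In (1, x) wl -> g wl = x) /\
  (forall mu mu' xs, prob mu -> prob mu' ->
     length mu = length xs -> length mu' = length xs ->
     d (g (combine mu xs)) (g (combine mu' xs)) <= C * l1dist mu mu') /\
  (forall mu xs ys, prob mu -> length mu = length xs -> length ys = length xs ->
     d (g (combine mu xs)) (g (combine mu ys)) <=
     sumR (map (fun p => fst p * d (fst (snd p)) (snd (snd p)))
               (combine mu (combine xs ys)))) /\
  (forall nu1 nu2 wl1 wl2, prob [nu1; nu2] -> valid wl1 -> valid wl2 ->
     g [(nu1, g wl1); (nu2, g wl2)] =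
     g (map (scale_w nu1) wl1 ++ map (scale_w nu2) wl2)).

Definition conv {X : Type} (g : list (R * X) -> X) (xs : list X) (x : X) : Prop :=
  exists mu, prob mu /\ length mu = length xs /\ x = g (combine mu xs).

Definition plane {X : Type} (g : list (R * X) -> X) (xs : list X) (x : X) : Prop :=
  exists y z t, conv g xs y /\ conv g xs z /\ 0 < t /\ t <= 1 /\
    g [(t, x); (1 - t, y)] = z.

(* Main.v *)
Require Import Defs.
From Stdlib Require Import Reals List.
From Stdlib Require Import Lra Lia Permutation Classical ClassicalEpsilon.
Import ListNotations.
Open Scope R_scope.


Definition incr (phi : nat -> nat) := forall k, (phi k < phi (S k))%nat.

Lemma incr_mono phi : incr phi -> forall j k, (j <= k)%nat -> (phi j <= phi k)%nat.
Proof. intros H j k Hjk; induction Hjk; [lia| specialize (H m); lia]. Qed.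

Lemma incr_ge phi : incr phi -> forall k, (k <= phi k)%nat.
Proof. intros H k; induction k; [lia| specialize (H k); lia]. Qed.

Lemma incr_comp phi psi : incr phi -> incr psi -> incr (fun k => phi (psi k)).
Proof. intros H1 H2 k. specialize (H2 k).
  assert (phi (S (psi k)) <= phi (psi (S k)))%nat by (apply incr_mono; auto).
  specialize (H1 (psi k)); lia. Qed.

Definition cvR (u : nat -> R) l := forall eps, 0<eps -> exists N, forall k, (N<=k)%nat -> Rabs (u k - l) < eps.

Lemma cvR_sub u l phi : incr phi -> cvR u l -> cvR (fun k => u (phi k)) l.
Proof. intros Hp H e He; destruct (H e He) as [N HN]; exists N; intros k Hk.
  apply HN. pose proof (incr_ge phi Hp k); lia. Qed.

Lemma inv_small e : 0 < e -> exists N:nat, forall k, (N <= k)%nat -> / INR (S k) < e.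
Proof. intros He. destruct (archimed_cor1 e He) as [N [H1 H2]]. exists N. intros k Hk.
  apply Rle_lt_trans with (2:=H1). apply Rinv_le_contravar. apply lt_0_INR; auto.
  apply le_INR; lia. Qed.

Lemma BW_sub (u : nat -> R) : (forall k, -1 <= u k <= 1) ->
  exists phi l, incr phi /\ cvR (fun k => u (phi k)) l.
Proof.
  intros Hb. destruct (Bolzano_Weierstrass u (fun c => -1 <= c <= 1) (compact_P3 _ _) Hb) as [l Hl].
  assert (HF : forall k N : nat, exists p, (N <= p)%nat /\ Rabs (u p - l) < / INR (S k)).
  { intros k N. assert (Hpos : 0 < / INR (S k)) by (apply Rinv_0_lt_compat, lt_0_INR; lia).
    destruct (Hl (disc l (mkposreal _ Hpos)) N) as [p [Hp1 Hp2]].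
    - exists (mkposreal _ Hpos). intros y Hy; exact Hy.
    - exists p; split; auto. }
  set (F := fun k N => proj1_sig (constructive_indefinite_description _ (HF k N))).
  assert (HFp : forall k N, (N <= F k N)%nat /\ Rabs (u (F k N) - l) < / INR (S k)).
  { intros k N; unfold F; destruct (constructive_indefinite_description _ _); auto. }
  set (phi := fix phi k := match k with O => F O O | S k' => F k (S (phi k')) end).
  exists phi, l. split.
  - intros k. simpl. destruct (HFp (S k) (S (phi k))); lia.
  - intros e He. destruct (inv_small e He) as [N HN]. exists N. intros k Hk.
    apply Rlt_trans with (/ INR (S k)); [|apply HN; auto].
    destruct k; simpl phi; apply HFp.
Qed.

Definition lconv (v : nat -> list R) w := forall eps, 0 < eps -> exists N, forall k, (N <= k)%nat -> l1dist (v k) w < eps.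

Lemma l1dist_cons a b l l' : l1dist (a :: l) (b :: l') = Rabs (a - b) + l1dist l l'.
Proof. reflexivity. Qed.

Lemma l1dist_nonneg l l' : 0 <= l1dist l l'.
Proof. revert l'; induction l; intros [|b l']; unfold l1dist; simpl; try lra.
  fold (l1dist l l'). pose proof (IHl l'). pose proof (Rabs_pos (a - b)); lra. Qed.

Lemma lconv_sub v w phi : incr phi -> lconv v w -> lconv (fun k => v (phi k)) w.
Proof. intros Hp H e He; destruct (H e He) as [N HN]; exists N; intros k Hk.
  apply HN. pose proof (incr_ge phi Hp k); lia. Qed.

Lemma BW_list : forall L (v : nat -> list R), (forall k, length (v k) = L) ->
  (forall k, Forall (fun t => -1 <= t <= 1) (v k)) ->
  exists phi w, incr phi /\ length w = L /\ lconv (fun k => v (phi k)) w.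
Proof.
  induction L; intros v Hl Hb.
  - exists (fun k => k), []. split; [intros k; lia|split; auto].
    intros e He; exists O; intros k _. specialize (Hl k). destruct (v k); [|simpl in Hl; lia].
    unfold l1dist; simpl; lra.
  - destruct (IHL (fun k => tl (v k))) as [phi1 [w1 [Hp1 [Hw1 Hc1]]]].
    { intros k; specialize (Hl k); destruct (v k); simpl in *; lia. }
    { intros k; specialize (Hb k); destruct (v k); simpl; auto. inversion Hb; auto. }
    destruct (BW_sub (fun k => hd 0 (v (phi1 k)))) as [phi2 [l [Hp2 Hc2]]].
    { intros k; specialize (Hb (phi1 k)); specialize (Hl (phi1 k)); destruct (v (phi1 k)); simpl in *; [lia|].
      inversion Hb; auto. }
    exists (fun k => phi1 (phi2 k)), (l :: w1). split; [apply incr_comp; auto|]. split; [simpl; auto|].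
    intros e He. destruct (Hc2 (e/2)) as [N2 HN2]; [lra|].
    destruct (lconv_sub _ _ _ Hp2 Hc1 (e/2)) as [N1 HN1]; [lra|].
    exists (max N1 N2). intros k Hk.
    specialize (HN1 k ltac:(lia)). specialize (HN2 k ltac:(lia)). simpl in *.
    specialize (Hl (phi1 (phi2 k))). destruct (v (phi1 (phi2 k))); simpl in *; [lia|].
    rewrite l1dist_cons. lra.
Qed.

Definition SC {X : Type} (d : X -> X -> R) (K : X -> Prop) :=
  forall u : nat -> X, (forall k, K (u k)) ->
  exists l, K l /\ forall eps, 0 < eps -> forall N, exists k, (N <= k)%nat /\ d (u k) l < eps.

Lemma SC_compact {X : Type} (d : X -> X -> R) K : is_metric d -> SC d K -> compact_set d K.
Proof.
  intros [Hd0 [Hd1 [Hsym Htri]]] HSC I U Hopen Hcov.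
  assert (Hleb : exists r, 0 < r /\ forall x, K x -> exists i, forall y, d x y < r -> U i y).
  { apply NNPP; intro Hn.
    assert (Hk : forall k : nat, exists x, K x /\ forall i, exists y, d x y < / INR (S k) /\ ~ U i y).
    { intros k. assert (Hr : 0 < / INR (S k)) by (apply Rinv_0_lt_compat, lt_0_INR; lia).
      apply NNPP; intro Hn2. apply Hn. exists (/ INR (S k)); split; auto.
      intros x Kx. apply NNPP; intro Hn3. apply Hn2. exists x; split; auto.
      intros i. apply NNPP; intro Hn4. apply Hn3. exists i. intros y Hy.
      apply NNPP; intro Hn5. apply Hn4. exists y; auto. }
    set (u := fun k => proj1_sig (constructive_indefinite_description _ (Hk k))).
    assert (Hu : forall k, K (u k) /\ forall i, exists y, d (u k) y < / INR (S k) /\ ~ U i y).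
    { intros k; unfold u; destruct (constructive_indefinite_description _ _); auto. }
    destruct (HSC u (fun k => proj1 (Hu k))) as [l [Kl Hcl]].
    destruct (Hcov l Kl) as [i0 Hi0]. destruct (Hopen i0 l Hi0) as [r0 [Hr0 Hb0]].
    destruct (inv_small (r0/2)) as [N HN]; [lra|].
    destruct (Hcl (r0/2) ltac:(lra) N) as [k [Hk1 Hk2]].
    destruct (proj2 (Hu k) i0) as [y [Hy1 Hy2]]. apply Hy2, Hb0.
    specialize (HN k Hk1). pose proof (Htri l (u k) y). rewrite Hsym in Hk2. lra. }
  destruct Hleb as [r [Hr Hleb]].
  apply NNPP; intro Hnf.
  destruct (classic (exists x, K x)) as [[x0 Kx0] | Hne].
  2:{ apply Hnf. exists nil. intros x Kx; exfalso; apply Hne; eauto. }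
  destruct (Hcov x0 Kx0) as [i0 _].
  assert (Hi : forall x, exists i, K x -> forall y, d x y < r -> U i y).
  { intros x. destruct (classic (K x)) as [Kx|nKx].
    - destruct (Hleb x Kx) as [i Hi]; exists i; auto.
    - exists i0; intros; contradiction. }
  set (ifun := fun x => proj1_sig (constructive_indefinite_description _ (Hi x))).
  assert (Hifun : forall x, K x -> forall y, d x y < r -> U (ifun x) y).
  { intros x; unfold ifun; destruct (constructive_indefinite_description _ _); auto. }
  assert (Hpick : forall L : list X, exists x, K x /\ forall y, In y L -> ~ U (ifun y) x).
  { intros L. apply NNPP; intro Hn. apply Hnf. exists (map ifun L). intros x Kx.
    apply NNPP; intro Hn2. apply Hn. exists x. split; auto. intros y Hy HU.
    apply Hn2. exists (ifun y). split; auto. apply in_map; auto. }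
  set (pick := fun L => proj1_sig (constructive_indefinite_description _ (Hpick L))).
  assert (Hpk : forall L, K (pick L) /\ forall y, In y L -> ~ U (ifun y) (pick L)).
  { intros L; unfold pick; destruct (constructive_indefinite_description _ _); auto. }
  set (LL := fix LL k := match k with O => nil | S k' => LL k' ++ [pick (LL k')] end).
  set (u := fun k => pick (LL k)).
  assert (Hin : forall j k, (j < k)%nat -> In (u j) (LL k)).
  { intros j k Hjk; induction Hjk; simpl; apply in_or_app; [right; left; auto| left; auto]. }
  assert (Hsep : forall j k, (j < k)%nat -> r <= d (u j) (u k)).
  { intros j k Hjk. destruct (Rle_or_lt r (d (u j) (u k))) as [H|H]; auto. exfalso.
    apply (proj2 (Hpk (LL k)) (u j) (Hin _ _ Hjk)). apply Hifun; auto. apply Hpk. }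
  destruct (HSC u (fun k => proj1 (Hpk (LL k)))) as [l [_ Hcl]].
  destruct (Hcl (r/2) ltac:(lra) O) as [j [_ Hj]].
  destruct (Hcl (r/2) ltac:(lra) (S j)) as [k [Hk1 Hk2]].
  specialize (Hsep j k Hk1). pose proof (Htri (u j) l (u k)). rewrite (Hsym l) in H. lra.
Qed.

Ltac vt := unfold valid, prob; simpl; split; [repeat (apply Forall_cons; [simpl; lra|]); apply Forall_nil | simpl; lra].

Section Canc.
Variables (X : Type) (d : X -> X -> R) (g : list (R * X) -> X) (C M : R).
Hypothesis Hmet : is_metric d.
Hypothesis Hconv : convex_like d C g.
Hypothesis HM : forall x y, d x y <= M.

Lemma lip2 (p c : R) Q a b : 0 <= p -> 0 <= c -> p + c = 1 ->
  d (g [(p, Q); (c, a)]) (g [(p, Q); (c, b)]) <= c * d a b.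
Proof.
  intros. destruct Hconv as [_ [_ [_ [_ [_ [_ [Hl _]]]]]]].
  destruct Hmet as [_ [Hd1 _]].
  pose proof (Hl [p; c] [Q; a] [Q; b] ltac:(vt) eq_refl eq_refl) as H2.
  simpl in H2. assert (d Q Q = 0) by (apply Hd1; auto). rewrite H3 in H2. lra.
Qed.

Lemma step_gen A B bet e c lam x y u w :
  0 <= A -> 0 <= B -> 0 < lam < 1 -> bet = lam * c -> e = (1 - lam) * c -> 0 < c ->
  A + B + c = 1 -> 0 < A + B ->
  g [(A + B, g [(A / (A + B), x); (B / (A + B), y)]); (c, g [(lam, u); (1 - lam, w)])]
  = g [(A, x); (B, y); (bet, u); (e, w)].
Proof.
  intros. destruct Hconv as [_ [_ [_ [_ [_ [_ [_ Ha]]]]]]].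
  assert (0 <= A / (A+B)) by (unfold Rdiv; apply Rmult_le_pos; [lra| left; apply Rinv_0_lt_compat; lra]).
  assert (0 <= B / (A+B)) by (unfold Rdiv; apply Rmult_le_pos; [lra| left; apply Rinv_0_lt_compat; lra]).
  rewrite Ha; [| vt | | vt].
  - simpl. unfold scale_w; simpl. f_equal. repeat f_equal; try (field; lra); subst; ring.
  - unfold valid, prob; simpl; split; [repeat (apply Forall_cons; [simpl; lra|]); apply Forall_nil | field; lra].
Qed.

Lemma merge_a A B bet e x y w : 0 <= A -> 0 <= B -> 0 <= bet -> 0 <= e -> A + B + bet + e = 1 ->
  g [(A, x); (B, y); (bet, x); (e, w)] = g [(A + bet, x); (B, y); (e, w)].
Proof.
  intros. destruct Hconv as [_ [Hp [Hm _]]].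
  rewrite (Hp _ [(A, x); (bet, x); (B, y); (e, w)]); [| vt | ].
  - apply Hm. vt.
  - constructor. constructor.
Qed.

Lemma merge_b A B bet e x y w : 0 <= A -> 0 <= B -> 0 <= bet -> 0 <= e -> A + B + bet + e = 1 ->
  g [(A, x); (B, y); (bet, y); (e, w)] = g [(A, x); (B + bet, y); (e, w)].
Proof.
  intros. destruct Hconv as [_ [Hp [Hm _]]].
  rewrite (Hp _ [(B, y); (bet, y); (A, x); (e, w)]); [| vt | ].
  - rewrite Hm; [|vt]. apply Hp; [vt|]. constructor.
  - eapply perm_trans; [apply perm_swap|]. constructor. apply perm_swap.
Qed.

Lemma near_x A e x y w : 0 <= A -> 0 <= e -> A + e = 1 ->
  d x (g [(A, x); (0, y); (e, w)]) <= e * M.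
Proof.
  intros. destruct Hconv as [_ [Hp [Hm [_ [Hdir [_ [Hl _]]]]]]].
  destruct Hmet as [Hd0 [Hd1 _]].
  assert (Hx : x = g [(A, x); (0, y); (e, x)]).
  { rewrite (Hp _ [(A, x); (e, x); (0, y)]); [|vt|constructor; constructor].
    rewrite Hm; [|vt]. symmetry. apply Hdir; [vt|]. left. f_equal. lra. }
  rewrite Hx at 1.
  pose proof (Hl [A; 0; e] [x; y; x] [x; y; w] ltac:(vt) eq_refl eq_refl) as H2. simpl in H2.
  assert (d x x = 0) by (apply Hd1; auto). assert (d y y = 0) by (apply Hd1; auto).
  pose proof (HM x w). pose proof (Hd0 x w). nra.
Qed.

Lemma near_y B e x y w : 0 <= B -> 0 <= e -> B + e = 1 ->
  d y (g [(0, x); (B, y); (e, w)]) <= e * M.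
Proof.
  intros. destruct Hconv as [_ [Hp [Hm [_ [Hdir [_ [Hl _]]]]]]].
  destruct Hmet as [Hd0 [Hd1 _]].
  assert (Hy : y = g [(0, x); (B, y); (e, y)]).
  { rewrite (Hp _ [(B, y); (e, y); (0, x)]); [|vt|].
    - rewrite Hm; [|vt]. symmetry. apply Hdir; [vt|]. left. f_equal. lra.
    - eapply perm_trans; [apply perm_swap|]. constructor. apply perm_swap. }
  rewrite Hy at 1.
  pose proof (Hl [0; B; e] [x; y; y] [x; y; w] ltac:(vt) eq_refl eq_refl) as H2. simpl in H2.
  assert (d x x = 0) by (apply Hd1; auto). assert (d y y = 0) by (apply Hd1; auto).
  pose proof (HM y w). pose proof (Hd0 y w). nra.
Qed.

End Canc.

Section Canc2.
Variables (X : Type) (d : X -> X -> R) (g : list (R * X) -> X) (C M : R).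
Hypothesis Hmet : is_metric d.
Hypothesis Hconv : convex_like d C g.
Hypothesis HM : forall x y, d x y <= M.

Lemma cancel_N lam x y w (N : nat) : 0 < lam < 1 -> (2 <= N)%nat ->
  lam * d x y <= d (g [(lam, x); (1 - lam, w)]) (g [(lam, y); (1 - lam, w)]) + 2 * M / INR N.
Proof.
  intros Hl HN.
  set (D := d (g [(lam, x); (1 - lam, w)]) (g [(lam, y); (1 - lam, w)])).
  assert (HN2 : 2 <= INR N) by (replace 2 with (INR 2) by (simpl; lra); apply le_INR; auto).
  set (T := (1 - lam) + INR N * lam).
  assert (HT : 0 < T) by (unfold T; nra).
  set (c := / T). assert (Hc : 0 < c) by (apply Rinv_0_lt_compat; auto).
  assert (HcT : c * T = 1) by (unfold c; field; lra).
  set (bet := lam * c). set (e := (1 - lam) * c).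
  assert (Hbet : 0 < bet) by (unfold bet; nra). assert (He : 0 <= e) by (unfold e; nra).
  assert (Hbe : bet + e = c) by (unfold bet, e; ring).
  assert (Hsum : INR N * bet + e = 1) by (unfold bet, e; unfold T in HcT; nra).
  set (P := fun k : nat => g [((INR N - INR k) * bet, x); (INR k * bet, y); (e, w)]).
  assert (Hstep : forall k, (S k <= N)%nat -> d (P k) (P (S k)) <= c * D).
  { intros k Hk.
    assert (Hk' : INR k + 1 <= INR N) by (rewrite <- S_INR; apply le_INR; auto).
    pose proof (pos_INR k) as Hk0.
    set (A := (INR N - INR k - 1) * bet). set (B := INR k * bet).
    assert (HA : 0 <= A) by (unfold A; nra). assert (HB : 0 <= B) by (unfold B; nra).
    assert (HABc : A + B + c = 1) by (unfold A, B, bet; unfold T in HcT; nra).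
    assert (HAB : 0 < A + B) by (unfold A, B; nra).
    assert (E1 : P k = g [(A + B, g [(A / (A + B), x); (B / (A + B), y)]); (c, g [(lam, x); (1 - lam, w)])]).
    { rewrite (step_gen X d g C Hconv A B bet e c lam x y x w); auto; try lra.
      rewrite (merge_a X d g C Hconv); try lra. unfold P. f_equal. f_equal. f_equal. unfold A; ring. }
    assert (E2 : P (S k) = g [(A + B, g [(A / (A + B), x); (B / (A + B), y)]); (c, g [(lam, y); (1 - lam, w)])]).
    { rewrite (step_gen X d g C Hconv A B bet e c lam x y y w); auto; try lra.
      rewrite (merge_b X d g C Hconv); try lra. unfold P. rewrite S_INR. f_equal. f_equal.
      - f_equal. unfold A; ring.
      - f_equal. f_equal. unfold B; ring. }
    rewrite E1, E2. apply (lip2 X d g C Hmet Hconv); lra. }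
  assert (Htel : forall k, (k <= N)%nat -> d (P O) (P k) <= INR k * (c * D)).
  { destruct Hmet as [Hd0 [Hd1 [Hsym Htri]]].
    induction k; intros Hk.
    - simpl. assert (d (P O) (P O) = 0) by (apply Hd1; auto). lra.
    - rewrite S_INR. pose proof (Htri (P O) (P k) (P (S k))). pose proof (Hstep k Hk).
      specialize (IHk ltac:(lia)). lra. }
  destruct Hmet as [Hd0 [Hd1 [Hsym Htri]]].
  assert (H0 : d x (P O) <= e * M).
  { unfold P. simpl INR. replace (0 * bet) with 0 by ring. replace (INR N - 0) with (INR N) by ring.
    apply (near_x X d g C M Hmet Hconv HM); nra. }
  assert (H1 : d y (P N) <= e * M).
  { unfold P. replace (INR N - INR N) with 0 by ring. replace (0 * bet) with 0 by ring.
    apply (near_y X d g C M Hmet Hconv HM); nra. }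
  pose proof (Htel N (le_n N)) as H2.
  assert (Hxy : d x y <= 2 * (e * M) + INR N * (c * D)).
  { pose proof (Htri x (P O) y). pose proof (Htri (P O) (P N) y). rewrite (Hsym y) in H1. lra. }
  assert (HM0 : 0 <= M) by (pose proof (HM x x); pose proof (Hd0 x x); lra).
  assert (HD0 : 0 <= D) by apply Hd0.
  assert (I1 : lam * (INR N * c) <= 1) by (unfold T in HcT; nra).
  assert (I2 : lam * e * INR N <= 1) by (unfold e; unfold T in HcT; nra).
  assert (I3 : lam * e <= 1 / INR N).
  { apply (Rmult_le_reg_r (INR N)); [lra|]. replace (1 / INR N * INR N) with 1 by (field; lra). lra. }
  unfold Rdiv. apply Rle_trans with (lam * (2 * (e * M) + INR N * (c * D))); [apply Rmult_le_compat_l; lra|].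
  assert (lam * (INR N * (c * D)) <= D) by nra.
  assert (lam * (2 * (e * M)) <= 2 * M * / INR N).
  { replace (lam * (2 * (e*M))) with (2 * M * (lam * e)) by ring. apply Rmult_le_compat_l; [lra|].
    unfold Rdiv in I3; lra. }
  lra.
Qed.

Lemma cancel lam x y w : 0 < lam <= 1 ->
  lam * d x y <= d (g [(lam, x); (1 - lam, w)]) (g [(lam, y); (1 - lam, w)]).
Proof.
  intros Hl. destruct (Req_dec lam 1) as [E|E].
  - subst. destruct Hconv as [_ [_ [_ [_ [Hdir _]]]]].
    rewrite (Hdir _ x); [|vt|left; reflexivity]. rewrite (Hdir _ y); [|vt|left; reflexivity]. lra.
  - set (D := d (g [(lam, x); (1 - lam, w)]) (g [(lam, y); (1 - lam, w)])).
    destruct (Rle_or_lt (lam * d x y) D) as [H|H]; auto. exfalso.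
    assert (HM0 : 0 <= M) by (destruct Hmet as [Hd0 _]; pose proof (HM x x); pose proof (Hd0 x x); lra).
    destruct (inv_small ((lam * d x y - D) / (2 * M + 1))) as [N0 HN0].
    { apply Rdiv_lt_0_compat; lra. }
    set (N := S (S N0)).
    pose proof (cancel_N lam x y w N ltac:(lra) ltac:(unfold N; lia)) as HC. fold D in HC.
    specialize (HN0 (S N0) ltac:(lia)). fold N in HN0.
    assert (HNp : 0 < INR N) by (apply lt_0_INR; unfold N; lia).
    assert (2 * M / INR N <= (2*M+1) * / INR N).
    { unfold Rdiv. apply Rmult_le_compat_r; [left; apply Rinv_0_lt_compat; auto| lra]. }
    assert ((2*M+1) * / INR N < lam * d x y - D).
    { apply Rmult_lt_reg_l with (/ (2*M+1)); [apply Rinv_0_lt_compat; lra|].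
      rewrite <- Rmult_assoc, Rinv_l by lra. unfold Rdiv in HN0. lra. }
    lra.
Qed.

End Canc2.

Lemma sumR_nonneg l : Forall (fun t => 0 <= t) l -> 0 <= sumR l.
Proof. induction 1; simpl; lra. Qed.

Lemma prob_bound l : prob l -> Forall (fun t => -1 <= t <= 1) l.
Proof.
  intros [H1 H2]. assert (Forall (fun t => 0 <= t /\ t <= sumR l) l).
  { clear H2. induction H1; constructor; simpl.
    - pose proof (sumR_nonneg _ H1); lra.
    - eapply Forall_impl; [|exact IHForall]. simpl. intros a [Ha Hb]. split; auto.
      lra. }
  eapply Forall_impl; [|exact H]. simpl. intros a [Ha Hb]; lra.
Qed.

Lemma cvR_ge h a B : cvR h a -> (forall k, B <= h k) -> B <= a.
Proof. intros Hc Hb. destruct (Rle_or_lt B a) as [H|H]; auto.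
  destruct (Hc (B - a)) as [N HN]; [lra|]. specialize (HN N (le_n N)). specialize (Hb N).
  apply Rabs_def2 in HN. lra. Qed.

Lemma cvR_le h a B : cvR h a -> (forall k, h k <= B) -> a <= B.
Proof. intros Hc Hb. destruct (Rle_or_lt a B) as [H|H]; auto.
  destruct (Hc (a - B)) as [N HN]; [lra|]. specialize (HN N (le_n N)). specialize (Hb N).
  apply Rabs_def2 in HN. lra. Qed.

Lemma lconv_cons v a w : (forall k, length (v k) = S (length w)) -> lconv v (a :: w) ->
  cvR (fun k => hd 0 (v k)) a /\ lconv (fun k => tl (v k)) w.
Proof.
  intros Hl Hc. split; intros e He; destruct (Hc e He) as [N HN]; exists N; intros k Hk;
  specialize (HN k Hk); specialize (Hl k); destruct (v k); simpl in *; try lia;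
  rewrite l1dist_cons in HN; pose proof (l1dist_nonneg l w); pose proof (Rabs_pos (r - a)); lra.
Qed.

Lemma lconv_nonneg : forall w v, (forall k, length (v k) = length w) ->
  (forall k, Forall (fun t => 0 <= t) (v k)) -> lconv v w -> Forall (fun t => 0 <= t) w.
Proof.
  induction w as [|a w IH]; intros v Hl Hn Hc; constructor.
  - destruct (lconv_cons v a w Hl Hc) as [H1 _]. apply (cvR_ge _ _ _ H1).
    intros k; specialize (Hn k); specialize (Hl k); destruct (v k); simpl in *; try lia.
    inversion Hn; auto.
  - destruct (lconv_cons v a w Hl Hc) as [_ H2]. apply (IH (fun k => tl (v k))); auto.
    + intros k; specialize (Hl k); destruct (v k); simpl in *; lia.
    + intros k; specialize (Hn k); destruct (v k); simpl; auto. inversion Hn; auto.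
Qed.

Lemma sumR_l1 : forall l l', length l = length l' -> Rabs (sumR l - sumR l') <= l1dist l l'.
Proof.
  induction l as [|a l IH]; intros [|b l'] H; simpl in *; try lia.
  - unfold l1dist; simpl. rewrite Rminus_0_r, Rabs_R0; lra.
  - rewrite l1dist_cons. specialize (IH l' ltac:(lia)).
    replace (a + sumR l - (b + sumR l')) with ((a - b) + (sumR l - sumR l')) by ring.
    pose proof (Rabs_triang (a - b) (sumR l - sumR l')). lra.
Qed.

Lemma lconv_prob v w : (forall k, prob (v k)) -> (forall k, length (v k) = length w) ->
  lconv v w -> prob w.
Proof.
  intros Hp Hl Hc. split.
  - apply (lconv_nonneg w v Hl); auto. intros k; apply Hp.
  - destruct (Req_dec (sumR w) 1) as [E|E]; auto. exfalso.
    assert (Hd : 0 < Rabs (sumR w - 1)) by (apply Rabs_pos_lt; lra).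
    destruct (Hc _ Hd) as [N HN]. specialize (HN N (le_n N)).
    pose proof (sumR_l1 (v N) w (Hl N)). destruct (Hp N) as [_ Hs]. rewrite Hs in H.
    rewrite Rabs_minus_sym in H. lra.
Qed.

Definition Kp {X : Type} (g : list (R * X) -> X) (xs : list X) (m : nat) (x : X)
  (p : list R * list R * R) : Prop :=
  prob (fst (fst p)) /\ length (fst (fst p)) = length xs /\
  prob (snd (fst p)) /\ length (snd (fst p)) = length xs /\
  / INR (S m) <= snd p <= 1 /\
  g [(snd p, x); (1 - snd p, g (combine (fst (fst p)) xs))] = g (combine (snd (fst p)) xs).

Definition Km {X : Type} g xs m (x : X) := exists p, Kp g xs m x p.

Section Main.
Variables (X : Type) (d : X -> X -> R) (g : list (R * X) -> X) (C M : R).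
Hypothesis Hmet : is_metric d.
Hypothesis Hconv : convex_like d C g.
Hypothesis HM : forall x y, d x y <= M.
Hypothesis Hcompl : complete_metric d.
Variable xs : list X.

Lemma lip1 (p c : R) a b Q : 0 <= p -> 0 <= c -> p + c = 1 ->
  d (g [(p, a); (c, Q)]) (g [(p, b); (c, Q)]) <= p * d a b.
Proof.
  intros. destruct Hconv as [_ [_ [_ [_ [_ [_ [Hl _]]]]]]].
  destruct Hmet as [_ [Hd1 _]].
  pose proof (Hl [p; c] [a; Q] [b; Q] ltac:(vt) eq_refl eq_refl) as H2.
  simpl in H2. assert (d Q Q = 0) by (apply Hd1; auto). rewrite H3 in H2. lra.
Qed.

Lemma lipY mu mu' : prob mu -> prob mu' -> length mu = length xs -> length mu' = length xs ->
  d (g (combine mu xs)) (g (combine mu' xs)) <= (Rabs C + 1) * l1dist mu mu'.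
Proof.
  intros. destruct Hconv as [_ [_ [_ [_ [_ [Hl _]]]]]].
  pose proof (Hl mu mu' xs H H0 H1 H2). pose proof (l1dist_nonneg mu mu').
  pose proof (Rle_abs C). nra.
Qed.

Lemma Km_SC m : SC d (Km g xs m).
Proof.
  intros u Hu.
  set (par := fun k => proj1_sig (constructive_indefinite_description _ (Hu k))).
  assert (Hpar : forall k, Kp g xs m (u k) (par k)).
  { intros k; unfold par; destruct (constructive_indefinite_description _ _); auto. }
  set (mu := fun k => fst (fst (par k))). set (nu := fun k => snd (fst (par k))).
  set (t := fun k => snd (par k)).
  assert (Hmu : forall k, prob (mu k) /\ length (mu k) = length xs) by (intros k; destruct (Hpar k) as (?&?&?&?&?&?); split; auto).
  assert (Hnu : forall k, prob (nu k) /\ length (nu k) = length xs) by (intros k; destruct (Hpar k) as (?&?&?&?&?&?); split; auto).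
  assert (Ht : forall k, / INR (S m) <= t k <= 1) by (intros k; destruct (Hpar k) as (?&?&?&?&?&?); auto).
  assert (Heq : forall k, g [(t k, u k); (1 - t k, g (combine (mu k) xs))] = g (combine (nu k) xs))
    by (intros k; destruct (Hpar k) as (?&?&?&?&?&?); auto).
  clearbody mu nu t. clear Hpar par.
  destruct (BW_list (length xs) mu) as [phi1 [muI [Hp1 [Hl1 Hc1]]]].
  { intros k; apply Hmu. } { intros k; apply prob_bound, Hmu. }
  destruct (BW_list (length xs) (fun k => nu (phi1 k))) as [phi2 [nuI [Hp2 [Hl2 Hc2]]]].
  { intros k; apply Hnu. } { intros k; apply prob_bound, Hnu. }
  destruct (BW_list 1 (fun k => [t (phi1 (phi2 k))])) as [phi3 [tl [Hp3 [Hl3 Hc3]]]].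
  { intros k; reflexivity. }
  { intros k; constructor; [|constructor]. specialize (Ht (phi1 (phi2 k))).
    pose proof (Rinv_0_lt_compat (INR (S (phi1 (phi2 k)))) ltac:(apply lt_0_INR; lia)).
    pose proof (Rinv_0_lt_compat (INR (S m)) ltac:(apply lt_0_INR; lia)). lra. }
  destruct tl as [|tI [|]]; simpl in Hl3; try lia. clear Hl3.
  set (phi := fun k => phi1 (phi2 (phi3 k))).
  assert (Hp : incr phi) by (exact (incr_comp phi1 (fun k => phi2 (phi3 k)) Hp1 (incr_comp phi2 phi3 Hp2 Hp3))).
  assert (Cmu : lconv (fun k => mu (phi k)) muI).
  { apply (lconv_sub (fun k => mu (phi1 k))); [apply incr_comp; auto|auto]. }
  assert (Cnu : lconv (fun k => nu (phi k)) nuI).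
  { apply (lconv_sub (fun k => nu (phi1 (phi2 k)))); auto. }
  assert (Ct : cvR (fun k => t (phi k)) tI).
  { intros e He. destruct (Hc3 e He) as [N HN]. exists N. intros k Hk. specialize (HN k Hk).
    rewrite l1dist_cons in HN. unfold l1dist in HN. simpl in HN. unfold phi. lra. }
  clear Hc1 Hc2 Hc3.
  assert (PmuI : prob muI) by (apply (lconv_prob (fun k => mu (phi k))); auto;
    [intros k; apply Hmu | intros k; rewrite Hl1; apply Hmu]).
  assert (PnuI : prob nuI) by (apply (lconv_prob (fun k => nu (phi k))); auto;
    [intros k; apply Hnu | intros k; rewrite Hl2; apply Hnu]).
  assert (HtI : / INR (S m) <= tI <= 1).
  { split; [apply (cvR_ge _ _ _ Ct) | apply (cvR_le _ _ _ Ct)]; intros k; apply Ht. }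
  assert (HmI : 0 < / INR (S m)) by (apply Rinv_0_lt_compat, lt_0_INR; lia).
  destruct Hmet as [Hd0 [Hd1 [Hsym Htri]]].
  set (YmI := g (combine muI xs)). set (YnI := g (combine nuI xs)).
  set (x := fun k => u (phi k)).
  set (A := fun k => g [(tI, x k); (1 - tI, YmI)]).
  set (C' := Rabs C + 1). assert (HC' : 0 < C') by (unfold C'; pose proof (Rabs_pos C); lra).
  assert (HA : forall k, d (A k) YnI <=
     C' * l1dist (mu (phi k)) muI + C' * (2 * Rabs (t (phi k) - tI)) + C' * l1dist (nu (phi k)) nuI).
  { intros k. destruct (Hmu (phi k)) as [Pm Lm]. destruct (Hnu (phi k)) as [Pn Ln].
    set (Ymk := g (combine (mu (phi k)) xs)).
    pose proof (Htri (A k) (g [(tI, x k); (1 - tI, Ymk)]) YnI) as T1.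
    pose proof (Htri (g [(tI, x k); (1 - tI, Ymk)]) (g [(t (phi k), x k); (1 - t (phi k), Ymk)]) YnI) as T2.
    assert (E : g [(t (phi k), x k); (1 - t (phi k), Ymk)] = g (combine (nu (phi k)) xs)) by apply Heq.
    rewrite E in T2.
    assert (B1 : d (A k) (g [(tI, x k); (1 - tI, Ymk)]) <= C' * l1dist (mu (phi k)) muI).
    { unfold A. eapply Rle_trans; [apply (lip2 X d g C); auto; try lra; repeat split; auto|].
      rewrite Hsym. eapply Rle_trans with (d Ymk YmI). 
      - pose proof (Hd0 Ymk YmI). nra.
      - apply lipY; auto; congruence. }
    assert (B2 : d (g [(tI, x k); (1 - tI, Ymk)]) (g [(t (phi k), x k); (1 - t (phi k), Ymk)])
                 <= C' * (2 * Rabs (t (phi k) - tI))).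
    { rewrite Hsym. destruct Hconv as [_ [_ [_ [_ [_ [Hl _]]]]]].
      specialize (Ht (phi k)).
      pose proof (Hl [t (phi k); 1 - t (phi k)] [tI; 1 - tI] [x k; Ymk] ltac:(vt) ltac:(vt) eq_refl eq_refl) as H.
      simpl in H. unfold l1dist in H. simpl in H.
      replace (1 - t (phi k) - (1 - tI)) with (- (t (phi k) - tI)) in H by ring.
      rewrite Rabs_Ropp in H. pose proof (Rabs_pos (t (phi k) - tI)). pose proof (Rle_abs C).
      unfold C'. nra. }
    assert (B3 : d (g (combine (nu (phi k)) xs)) YnI <= C' * l1dist (nu (phi k)) nuI)
      by (apply lipY; auto; congruence).
    rewrite E in B2. lra. }
  assert (HA0 : forall e, 0 < e -> exists N, forall k, (N <= k)%nat -> d (A k) YnI < e).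
  { intros e He.
    destruct (Cmu (e / (3 * C'))) as [N1 HN1]. { apply Rdiv_lt_0_compat; lra. }
    destruct (Cnu (e / (3 * C'))) as [N2 HN2]. { apply Rdiv_lt_0_compat; lra. }
    destruct (Ct (e / (6 * C'))) as [N3 HN3]. { apply Rdiv_lt_0_compat; lra. }
    exists (max N1 (max N2 N3)). intros k Hk.
    specialize (HN1 k ltac:(lia)). specialize (HN2 k ltac:(lia)). specialize (HN3 k ltac:(lia)).
    specialize (HA k).
    assert (C' * l1dist (mu (phi k)) muI < e / 3).
    { replace (e/3) with (C' * (e / (3 * C'))) by (field; lra). apply Rmult_lt_compat_l; auto. }
    assert (C' * l1dist (nu (phi k)) nuI < e / 3).
    { replace (e/3) with (C' * (e / (3 * C'))) by (field; lra). apply Rmult_lt_compat_l; auto. }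
    assert (C' * (2 * Rabs (t (phi k) - tI)) < e / 3).
    { replace (e/3) with (C' * (2 * (e / (6 * C')))) by (field; lra). apply Rmult_lt_compat_l; auto; lra. }
    lra. }
  assert (HtI0 : 0 < tI) by lra.
  assert (Hcau : cauchy_seq d x).
  { intros e He. destruct (HA0 (tI * e / 2)) as [N HN].
    { apply Rdiv_lt_0_compat; [apply Rmult_lt_0_compat|]; lra. }
    exists N. intros j k Hj Hk.
    pose proof (cancel X d g C M (conj Hd0 (conj Hd1 (conj Hsym Htri))) Hconv HM tI (x j) (x k) YmI ltac:(lra)) as Hc.
    fold (A j) (A k) in Hc.
    pose proof (Htri (A j) YnI (A k)). rewrite (Hsym YnI) in H.
    specialize (HN j Hj) as H1. specialize (HN k Hk) as H2.
    apply (Rmult_lt_reg_l tI); auto. lra. }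
  destruct (Hcompl x Hcau) as [l Hl].
  exists l. split.
  - exists (muI, nuI, tI). unfold Kp; simpl. refine (conj PmuI (conj Hl1 (conj PnuI (conj Hl2 (conj HtI _))))).
    fold YmI.
    apply Hd1. fold YmI YnI.
    apply Rle_antisym; [|apply Hd0].
    apply Rnot_lt_le; intro Hpos.
    destruct (HA0 (d (g [(tI, l); (1 - tI, YmI)]) YnI / 2)) as [N1 HN1]; [lra|].
    destruct (Hl (d (g [(tI, l); (1 - tI, YmI)]) YnI / 2)) as [N2 HN2]; [lra|].
    specialize (HN1 (max N1 N2) ltac:(lia)). specialize (HN2 (max N1 N2) ltac:(lia)).
    pose proof (lip1 tI (1 - tI) l (x (max N1 N2)) YmI ltac:(lra) ltac:(lra) ltac:(lra)) as HL.
    fold (A (max N1 N2)) in HL. rewrite Hsym in HN2.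
    pose proof (Htri (g [(tI, l); (1 - tI, YmI)]) (A (max N1 N2)) YnI).
    pose proof (Hd0 l (x (max N1 N2))). nra.
  - intros e He N. destruct (Hl e He) as [N1 HN1]. exists (phi (max N N1)). split.
    + pose proof (incr_ge phi Hp (max N N1)); lia.
    + apply (HN1 (max N N1)); lia.
Qed.

End Main.

Theorem lemma2p6 (X : Type) (d : X -> X -> R) (g : list (R * X) -> X) (C : R)
  (Hmet : is_metric d) (Hbdd : bounded_metric d) (Hcompl : complete_metric d)
  (Hconv : convex_like d C g) (xs : list X) :
  sigma_compact d (plane g xs).
Proof.
  destruct Hbdd as [M HM].
  exists (Km g xs). split.
  - intros m. apply SC_compact; auto. apply (Km_SC X d g C M); auto.
  - intros x. split.
    + intros (y & z & t & [mu [Pm [Lm Ey]]] & [nu [Pn [Ln Ez]]] & Ht0 & Ht1 & E).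
      destruct (inv_small t Ht0) as [N HN]. exists N, (mu, nu, t).
      unfold Kp; simpl. subst y z. specialize (HN N (le_n N)).
      refine (conj Pm (conj Lm (conj Pn (conj Ln (conj (conj _ Ht1) E))))). left; exact HN.
    + intros [m [[[mu nu] t] (Pm & Lm & Pn & Ln & Ht & E)]]; cbn [fst snd] in *.
      exists (g (combine mu xs)), (g (combine nu xs)), t. repeat split.
      * exists mu; auto.
      * exists nu; auto.
      * pose proof (Rinv_0_lt_compat (INR (S m)) ltac:(apply lt_0_INR; lia)); lra.
      * lra.
      * exact E.
Qed.
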